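(* Let $\mathcal{P}_1,\mathcal{P}_2$ be finite posets such that $\mathcal{C}(\mathcal{P}_j)$ has $q_j$ extremal rays for $j=1,2$, and suppose $\mathcal{C}(\mathcal{P}_2)$ is simplicial. Then the maximum ND rank of matrices in $\mathcal{C}(\mathcal{P}_1)\otimes\mathcal{C}(\mathcal{P}_2)$ is $\min(q_1,q_2)$.
   Context: For a finite poset $\mathcal{Q}$, the order cone $\mathcal{C}(\mathcal{Q})\subset\mathbb{R}^{\mathcal{Q}}$ is the set of $\mathbf{f}$ with $f_x\ge0$ for all $x$ and $f_x\le f_y$ whenever $x\preceq y$; an extremal ray is a one-dimensional face, and a cone in $\mathbb{R}^p$ is simplicial if it is the conical hull of $p$ linearly independent vectors. $\mathcal{C}(\mathcal{P}_1)\otimes\mathcal{C}(\mathcal{P}_2)$ is the set of matrices $\sum_{i=1}^r\mathbf{a}_i\mathbf{b}_i^\intercal$ (finite $r$) with $\mathbf{a}_i\in\mathcal{C}(\mathcal{P}_1)$, $\mathbf{b}_i\in\mathcal{C}(\mathcal{P}_2)$; the ND rank of such a matrix is the minimal such $r$, and the maximum ND rank is the largest ND rank attained by such matrices. *)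

(* Defs.v *)
From HB Require Import structures.
From mathcomp Require Import all_boot all_order all_algebra.
From mathcomp Require Import reals.
Set Implicit Arguments. Unset Strict Implicit. Unset Printing Implicit Defensive.
Import Order.TTheory GRing.Theory Num.Theory.
Local Open Scope ring_scope.

Section Cones.
Variable R : realType.

Definition order_cone (d : Order.disp_t) (Q : finPOrderType d) (f : Q -> R) : Prop :=
  (forall x, 0 <= f x) /\ (forall x y : Q, (x <= y)%O -> f x <= f y).

Variable T : finType.

Definition vadd (f g : T -> R) : T -> R := fun x => f x + g x.
Definition vscale (t : R) (f : T -> R) : T -> R := fun x => t * f x.
Definition vzero : T -> R := fun _ => 0.

Definition is_face (K F : (T -> R) -> Prop) : Prop :=
  (forall x, F x -> K x) /\
  F vzero /\
  (forall x y, F x -> F y -> F (vadd x y)) /\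
  (forall t x, 0 <= t -> F x -> F (vscale t x)) /\
  (forall x y, K x -> K y -> F (vadd x y) -> F x /\ F y).

Definition one_dimensional (F : (T -> R) -> Prop) : Prop :=
  exists v, v <> vzero /\ (forall x, F x -> exists t, x = vscale t v) /\
            (exists x, F x /\ x <> vzero).

Definition extremal_ray (K F : (T -> R) -> Prop) : Prop :=
  is_face K F /\ one_dimensional F.

Definition num_extremal_rays (K : (T -> R) -> Prop) (q : nat) : Prop :=
  exists Fs : 'I_q -> ((T -> R) -> Prop),
    injective Fs /\ (forall i, extremal_ray K (Fs i)) /\
    (forall F, extremal_ray K F -> exists i, F = Fs i).

Definition simplicial (K : (T -> R) -> Prop) : Prop :=
  exists v : T -> (T -> R),
    (forall c : T -> R, (forall x, \sum_(i : T) c i * v i x = 0) -> forall i, c i = 0) /\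
    (forall f, K f <-> exists c : T -> R, (forall i, 0 <= c i) /\
                         forall x, f x = \sum_(i : T) c i * v i x).

End Cones.

Section Tensor.
Variable R : realType.
Variables (d1 d2 : Order.disp_t) (P1 : finPOrderType d1) (P2 : finPOrderType d2).

Definition nd_decomp (M : P1 -> P2 -> R) (r : nat) : Prop :=
  exists (a : 'I_r -> P1 -> R) (b : 'I_r -> P2 -> R),
    (forall i, order_cone (a i)) /\ (forall i, order_cone (b i)) /\
    forall x y, M x y = \sum_(i < r) a i x * b i y.

Definition in_tensor_cone (M : P1 -> P2 -> R) : Prop := exists r, nd_decomp M r.

Definition nd_rank_is (M : P1 -> P2 -> R) (k : nat) : Prop :=
  nd_decomp M k /\ forall r, nd_decomp M r -> (k <= r)%N.

Definition max_nd_rank_is (m : nat) : Prop :=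
  (exists M, in_tensor_cone M /\ nd_rank_is M m) /\
  (forall M k, in_tensor_cone M -> nd_rank_is M k -> (k <= m)%N).

End Tensor.

(* Main.v *)
Require Import Defs.
From HB Require Import structures.
From mathcomp Require Import all_boot all_order all_algebra reals.
From mathcomp Require Import boolp ring zify.
Set Implicit Arguments. Unset Strict Implicit. Unset Printing Implicit Defensive.
Import Order.TTheory GRing.Theory Num.Theory.
Local Open Scope ring_scope.

Lemma cone_ge0 (R : realType) d (P : finPOrderType d) (f : P -> R) :
  order_cone f -> forall x, 0 <= f x.
Proof. by case. Qed.

Lemma cone_sum (R : realType) d (P : finPOrderType d) (I : finType)
  (c : I -> R) (g : I -> P -> R) :
  (forall i, 0 <= c i) -> (forall i, order_cone (g i)) ->
  order_cone (fun x => \sum_i c i * g i x).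
Proof.
move=> c0 gK; split.
  by move=> x; apply: sumr_ge0 => i _; apply: mulr_ge0 => //; case: (gK i).
move=> x y xy; apply: ler_sum => i _; apply: ler_wpM2l => //.
by case: (gK i) => _ ->.
Qed.

Lemma ray_ratio (R : realType) d (P : finPOrderType d) (F : (P -> R) -> Prop) :
  extremal_ray (@order_cone R d P) F ->
  forall x u, F x -> F u -> u <> @vzero R P ->
  exists l, 0 <= l /\ x = vscale l u.
Proof.
move=> [[FK _] [v [_ [Fv _]]]] x u Fx Fu u0.
have [p up] : exists p, u p != 0.
  apply: contra_notP u0 => H.
  by apply: funext => z; apply/eqP; apply: contra_notT H => ?; exists z.
have [s xs] := Fv _ Fx; have [s' us] := Fv _ Fu.
have upos : 0 < u p by rewrite lt0r up /=; case: (FK _ Fu) => ->.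
exists (x p / u p); split.
  by apply: divr_ge0; [case: (FK _ Fx) => -> | exact: ltW].
have s'0 : s' != 0 by move: up; rewrite us /vscale; apply: contraNneq => ->; rewrite mul0r.
have vp0 : v p != 0 by move: up; rewrite us /vscale; apply: contraNneq => ->; rewrite mulr0.
apply: funext => z; rewrite xs us /vscale.
field; by rewrite s'0 vp0.
Qed.

Lemma ray_eq (R : realType) d (P : finPOrderType d) (F1 F2 : (P -> R) -> Prop) u :
  extremal_ray (@order_cone R d P) F1 -> extremal_ray (@order_cone R d P) F2 ->
  F1 u -> F2 u -> u <> @vzero R P -> F1 = F2.
Proof.
move=> E1 E2 u1 u2 u0.
have H : forall G1 G2, extremal_ray (@order_cone R d P) G1 ->
    extremal_ray (@order_cone R d P) G2 -> G1 u -> G2 u -> forall x, G1 x -> G2 x.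
  move=> G1 G2 EG1 EG2 g1 g2 x G1x.
  have [l [l0 ->]] := ray_ratio EG1 G1x g1 u0.
  by case: EG2 => [[_ [_ [_ [HZ _]]]] _]; apply: HZ.
by apply: funext => x; apply: propext; split; apply: H.
Qed.

Lemma face_sum (R : realType) d (P : finPOrderType d) (F : (P -> R) -> Prop)
  (I : finType) (g : I -> P -> R) :
  is_face (@order_cone R d P) F -> (forall i, order_cone (g i)) ->
  F (fun x => \sum_i g i x) -> forall i, F (g i).
Proof.
move=> [_ [_ [_ [_ HF]]]] gK Fs i.
have E : (fun x => \sum_i g i x) = vadd (g i) (fun x => \sum_(j | j != i) g j x).
  by apply: funext => x; rewrite /vadd (bigD1 i).
have K2 : order_cone (fun x => \sum_(j | j != i) g j x).
  have -> : (fun x => \sum_(j | j != i) g j x) =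
            (fun x => \sum_j (if j != i then 1 else 0) * g j x).
    apply: funext => x; rewrite [RHS](bigID (fun j => j != i)) /=.
    rewrite [X in _ = _ + X]big1 ?addr0; last by move=> j /negbTE ->; rewrite mul0r.
    by apply: eq_bigr => j ->; rewrite mul1r.
  by apply: cone_sum => // j; case: (j != i).
by have [] := HF _ _ (gK i) K2; first by rewrite -E.
Qed.

Definition ind (R : realType) (P : finType) (U : {set P}) : P -> R :=
  fun x => (x \in U)%:R.

Definition good (R : realType) d (P : finPOrderType d) (f : P -> R) (U : {set P}) : bool :=
 [&& U != set0, U \subset [set x | f x != 0],
  [forall x, forall y, ((x <= y)%O && (x \in U)) ==> (y \in U)] &
  [forall x, forall y, [&& (x <= y)%O, (y \in U) & (x \notin U)] ==> (f x < f y)]].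

Lemma goodP (R : realType) d (P : finPOrderType d) (f : P -> R) (U : {set P}) :
  good f U <->
  [/\ U != set0, (forall x, x \in U -> f x != 0),
      (forall x y, (x <= y)%O -> x \in U -> y \in U) &
      (forall x y, (x <= y)%O -> y \in U -> x \notin U -> f x < f y)].
Proof.
split.
  case/and4P => U0 /subsetP US /forallP H1 /forallP H2; split => //.
  - by move=> x /US; rewrite inE.
  - by move=> x y xy xU; move/forallP: (H1 x) => /(_ y); rewrite xy xU.
  - by move=> x y xy yU xU; move/forallP: (H2 x) => /(_ y); rewrite xy yU xU.
case=> U0 US H1 H2; apply/and4P; split => //.
- by apply/subsetP => x /US; rewrite inE.
- apply/forallP => x; apply/forallP => y; apply/implyP => /andP [xy xU].
  exact: H1 xy xU.
- apply/forallP => x; apply/forallP => y; apply/implyP => /and3P [xy yU xU].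
  exact: H2 xy yU xU.
Qed.

Definition ray (R : realType) (P : finType) (U : {set P}) (g : P -> R) : Prop :=
  exists t, 0 <= t /\ g = vscale t (ind R U).

Lemma ray_extremal (R : realType) d (P : finPOrderType d) (f : P -> R) (U : {set P}) :
  good f U -> (forall V, good f V -> (#|U| <= #|V|)%N) ->
  extremal_ray (@order_cone R d P) (ray U).
Proof.
move=> gU minU; have [U0 US H1 H2] := (goodP f U).1 gU.
have [u0 u0U] : exists u0, u0 \in U.
  by case/set0Pn: U0 => u0 ?; exists u0.
have indK : order_cone (ind R U).
  split; first by move=> x; rewrite /ind ler0n.
  move=> x y xy; rewrite /ind; case xU: (x \in U); last by rewrite ler0n.
  by rewrite (H1 _ _ xy xU).
have scK : forall t, 0 <= t -> order_cone (vscale t (ind R U)).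
  move=> t t0; case: indK => i0 i1; split.
    by move=> x; rewrite /vscale mulr_ge0.
  by move=> x y xy; rewrite /vscale ler_wpM2l // i1.
have key : forall x y : P -> R, order_cone x -> order_cone y ->
    forall t, (forall z, x z + y z = t * ind R U z) -> ray U x.
  move=> x y [x0 x1] [y0 y1] t E.
  have out : forall z, z \notin U -> x z = 0.
    move=> z zU; have := E z; rewrite /ind (negbTE zU) mulr0 => /eqP.
    by rewrite paddr_eq0 // => /andP [/eqP].
  have cmp : forall a b, (a <= b)%O -> a \in U -> x a = x b.
    move=> a b ab aU; have bU := H1 _ _ ab aU.
    have Ea := E a; have Eb := E b; rewrite /ind aU bU in Ea Eb.
    have xa := x1 _ _ ab; have ya := y1 _ _ ab.
    apply/eqP; rewrite eq_le xa /=.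
    have : x a + y a = x b + y b by rewrite Ea Eb.
    move=> H; rewrite -(lerD2r (y a)) H lerD2l //.
  pose V := [set z in U | x z == x u0].
  have gV : good f V.
    apply/goodP; split.
    - by apply/set0Pn; exists u0; rewrite inE u0U eqxx.
    - by move=> z; rewrite inE => /andP [/US].
    - move=> a b ab; rewrite !inE => /andP [aU /eqP <-].
      by rewrite (H1 _ _ ab aU) (cmp _ _ ab aU) eqxx.
    - move=> a b ab; rewrite !inE => /andP [bU /eqP bx].
      case aU: (a \in U) => /=; last by move=> _; apply: H2 ab bU _; rewrite aU.
      have := cmp _ _ ab aU; rewrite bx => ->; by rewrite eqxx.
  have VU : V \subset U by apply/subsetP => z; rewrite inE => /andP [].
  have /eqP VeU : V == U by rewrite eqEcard VU minU.
  exists (x u0); split; first exact: x0.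
  apply: funext => z; rewrite /vscale /ind.
  case zU: (z \in U); last by rewrite mulr0 out // zU.
  rewrite mulr1; move: zU; rewrite -VeU inE => /andP [_ /eqP] //.
split; last first.
  exists (ind R U); split.
    move=> /(congr1 (fun g => g u0)); rewrite /ind /vzero u0U => /eqP.
    by rewrite oner_eq0.
  split; first by move=> g [t [_ ->]]; exists t.
  exists (ind R U); split; first by exists 1; split => //; apply: funext => z; rewrite /vscale mul1r.
  move=> /(congr1 (fun g => g u0)); rewrite /ind /vzero u0U => /eqP.
  by rewrite oner_eq0.
split; first by move=> g [t [t0 ->]]; exact: scK.
split; first by exists 0; split => //; apply: funext => z; rewrite /vscale mul0r.
split.
  move=> g h [t [t0 ->]] [s [s0 ->]]; exists (t + s); split; first exact: addr_ge0.
  by apply: funext => z; rewrite /vadd /vscale mulrDl.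
split.
  move=> s g s0 [t [t0 ->]]; exists (s * t); split; first exact: mulr_ge0.
  by apply: funext => z; rewrite /vscale mulrA.
move=> x y Kx Ky [t [t0 E]]; split.
  by apply: (key x y Kx Ky t) => z; rewrite -/(vadd x y z) E.
by apply: (key y x Ky Kx t) => z; rewrite addrC -/(vadd x y z) E.
Qed.

Lemma exists_min (R : realType) (I : finType) (p : pred I) (v : I -> R) i0 :
  p i0 -> exists i, p i /\ forall j, p j -> v i <= v j.
Proof.
by move=> pi0; case: (arg_minP v pi0) => i pi H; exists i; split.
Qed.

Definition mu (R : realType) d (P : finPOrderType d) (f : P -> R) : nat :=
  addn #|[set x | f x != 0]|
   #|[set p : P * P | (p.1 <= p.2)%O && (f p.1 != f p.2)]|.

Lemma ray_decomp (R : realType) d (P : finPOrderType d) q :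
  num_extremal_rays (@order_cone R d P) q ->
  exists w : 'I_q -> P -> R, (forall k, order_cone (w k)) /\
    forall f, order_cone f -> exists l : 'I_q -> R, (forall k, 0 <= l k) /\
      forall x, f x = \sum_k l k * w k x.
Proof.
move=> [Fs [Finj [HE Hall]]].
have [w Hw] : exists w : 'I_q -> P -> R, forall k, Fs k (w k) /\ w k <> @vzero R P.
  have H : forall k, exists x, Fs k x /\ x <> @vzero R P.
    by move=> k; case: (HE k) => _ [v [_ [_ [x [Fx x0]]]]]; exists x.
  by have [w' Hw'] := boolp.choice H; exists w'.
exists w; split.
  by move=> k; case: (HE k) => [[FK _] _]; apply: FK; case: (Hw k).
move=> f; move: {2}(mu f).+1 (ltnSn (mu f)) => n; elim: n f => [//|n IH] f muf Kf.
case: (boolP [forall x, f x == 0]) => [/forallP f0 | ].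
  exists (fun=> 0); split => // x; rewrite big1 ?(eqP (f0 x)) // => k _.
  by rewrite mul0r.
rewrite negb_forall => /existsP [x0 fx0].
have [f0 f1] := Kf.
have gS : good f [set x | f x != 0].
  apply/goodP; split.
  - by apply/set0Pn; exists x0; rewrite inE.
  - by move=> x; rewrite inE.
  - move=> x y xy; rewrite !inE => fx; rewrite gt_eqF //.
    by apply: (lt_le_trans _ (f1 _ _ xy)); rewrite lt0r fx f0.
  - move=> x y xy; rewrite !inE negbK => fy /eqP ->.
    by rewrite lt0r fy f0.
pose pn := fun m => [exists U, good f U && (#|U| == m)].
have exn : exists m, pn m.
  by exists #|[set x | f x != 0]|; apply/existsP; exists [set x | f x != 0]; rewrite gS eqxx.
case: (ex_minnP exn) => m /existsP [U /andP [gU /eqP cU]] minm.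
have minU : forall V, good f V -> (#|U| <= #|V|)%N.
  move=> V gV; rewrite cU; apply: minm; apply/existsP; exists V.
  by rewrite gV eqxx.
have E := ray_extremal gU minU.
have [k Ek] := Hall _ E.
have [U0 US H1 H2] := (goodP f U).1 gU.
have [u0 u0U] : exists u0, u0 \in U by case/set0Pn: U0 => u0 ?; exists u0.
pose pr : pred (P + (P * P)) := fun i => match i with
  | inl x => x \in U
  | inr p => [&& (p.1 <= p.2)%O, p.2 \in U & p.1 \notin U] end.
pose val : P + (P * P) -> R := fun i => match i with
  | inl x => f x
  | inr p => f p.2 - f p.1 end.
have [i0 [pi0 mini0]] := @exists_min R _ pr val (inl u0) u0U.
set t := val i0.
have tx : forall x, x \in U -> t <= f x by move=> x xU; exact: (mini0 (inl x)).
have tp : forall a b, (a <= b)%O -> b \in U -> a \notin U -> t <= f b - f a.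
  by move=> a b ab bU aU; apply: (mini0 (inr (a, b))); rewrite /= ab bU aU.
have tcase : (exists2 x, x \in U & t = f x) \/
    (exists a b, [/\ (a <= b)%O, b \in U, a \notin U & t = f b - f a]).
  rewrite /t; case: i0 pi0 {mini0 t tx tp} => [x /= xU | [a b] /= /and3P [ab bU aU]].
    by left; exists x.
  by right; exists a, b.
have t0 : 0 < t.
  case: tcase => [[x xU ->] | [a [b [ab bU aU ->]]]].
    by rewrite lt0r US // f0.
  by rewrite subr_gt0; apply: H2.
pose f' := fun x => f x - t * ind R U x.
have Kf' : order_cone f'.
  split.
    move=> x; rewrite /f' /ind; case xU: (x \in U).
      by rewrite mulr1 subr_ge0 tx.
    by rewrite mulr0 subr0 f0.
  move=> a b ab; rewrite /f' /ind; case aU: (a \in U).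
    by rewrite (H1 _ _ ab aU) lerD2r f1.
  rewrite mulr0 subr0; case bU: (b \in U); last by rewrite mulr0 subr0 f1.
  by rewrite mulr1 lerBrDr addrC -lerBrDr; apply: tp => //; rewrite aU.
have ltmu : (mu f' < mu f)%N.
  have S1 : [set x | f' x != 0] \subset [set x | f x != 0].
    apply/subsetP => x; rewrite !inE /f' /ind; apply: contraNneq => fx.
    case xU: (x \in U); last by rewrite fx mulr0 subr0.
    by move: (US _ xU); rewrite fx eqxx.
  have S2 : [set p : P * P | (p.1 <= p.2)%O && (f' p.1 != f' p.2)] \subset
            [set p : P * P | (p.1 <= p.2)%O && (f p.1 != f p.2)].
    apply/subsetP => [[a b]]; rewrite !inE /= /f' /ind => /andP [ab].
    rewrite ab /=; apply: contraNneq => fab.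
    case aU: (a \in U); first by rewrite (H1 _ _ ab aU) fab.
    case bU: (b \in U); last by rewrite fab.
    by have := H2 _ _ ab bU; rewrite aU fab ltxx => /(_ isT).
  rewrite /mu; case: tcase => [[x xU tE] | [a [b [ab bU aU tE]]]].
    have P1 : [set x | f' x != 0] \proper [set x | f x != 0].
      apply/properP; split => //; exists x; rewrite !inE ?US //.
      by rewrite /f' /ind xU mulr1 tE subrr eqxx.
    by have := proper_card P1; have := subset_leq_card S2; move=> h1 h2; rewrite -addSn leq_add.
  have P2 : [set p : P * P | (p.1 <= p.2)%O && (f' p.1 != f' p.2)] \proper
            [set p : P * P | (p.1 <= p.2)%O && (f p.1 != f p.2)].
    apply/properP; split => //; exists (a, b); rewrite !inE /= ab /=.
      by rewrite lt_eqF // H2.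
    by rewrite /f' /ind (negbTE aU) bU tE mulr0 mulr1 subr0 opprB addrC subrK eqxx.
  by have := proper_card P2; have := subset_leq_card S1; move=> h1 h2; rewrite -addnS leq_add.
have [l' [l'0 El']] := IH f' (leq_trans ltmu muf) Kf'.
have indF : Fs k (ind R U).
  by rewrite -Ek; exists 1; split => //; apply: funext => z; rewrite /vscale mul1r.
have [wk0 wk1] := Hw k.
have [al [al0 Eal]] := ray_ratio (HE k) indF wk0 wk1.
exists (fun j => l' j + (if j == k then t * al else 0)); split.
  by move=> j; apply: addr_ge0 => //; case: (j == k) => //; apply: mulr_ge0 => //; exact: ltW.
move=> x; have -> : f x = f' x + t * ind R U x by rewrite /f' subrK.
rewrite El' Eal /vscale.
rewrite [RHS](eq_bigr (fun j => l' j * w j x + (if j == k then t * al else 0) * w j x)); last by move=> j _; rewrite mulrDl.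
rewrite big_split /= [X in _ = _ + X](bigD1 k) //= eqxx [X in _ = _ + (_ + X)]big1 ?addr0 ?mulrA //.
by move=> j /negbTE ->; rewrite mul0r.
Qed.

Lemma nd_reduce1 (R : realType) d1 d2 (P1 : finPOrderType d1) (P2 : finPOrderType d2)
  q (M : P1 -> P2 -> R) r :
  num_extremal_rays (@order_cone R d1 P1) q -> nd_decomp M r -> nd_decomp M q.
Proof.
move=> /ray_decomp [w [wK Hw]] [a [b [aK [bK EM]]]].
have [l Hl] := boolp.choice (fun i => Hw _ (aK i)).
exists w, (fun k y => \sum_i l i k * b i y); split => //; split.
  by move=> k; apply: cone_sum => // i; case: (Hl i) => ->.
move=> x y; rewrite EM.
under eq_bigr => i _ do rewrite (proj2 (Hl i) x) mulr_suml.
rewrite exchange_big /=; apply: eq_bigr => k _; rewrite mulr_sumr.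
by apply: eq_bigr => i _; rewrite mulrCA mulrA.
Qed.

Lemma nd_reduce2 (R : realType) d1 d2 (P1 : finPOrderType d1) (P2 : finPOrderType d2)
  q (M : P1 -> P2 -> R) r :
  num_extremal_rays (@order_cone R d2 P2) q -> nd_decomp M r -> nd_decomp M q.
Proof.
move=> /ray_decomp [w [wK Hw]] [a [b [aK [bK EM]]]].
have [l Hl] := boolp.choice (fun i => Hw _ (bK i)).
exists (fun k x => \sum_i l i k * a i x), w; split.
  by move=> k; apply: cone_sum => // i; case: (Hl i) => ->.
split => // x y; rewrite EM.
under eq_bigr => i _ do rewrite (proj2 (Hl i) y) mulr_sumr.
rewrite exchange_big /=; apply: eq_bigr => k _; rewrite mulr_suml.
by apply: eq_bigr => i _; rewrite mulrCA mulrA.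
Qed.

Lemma face_unscale (R : realType) d (P : finPOrderType d) (F : (P -> R) -> Prop) c a :
  is_face (@order_cone R d P) F -> 0 <= c -> c != 0 -> F (fun x => c * a x) -> F a.
Proof.
move=> [_ [_ [_ [HS _]]]] c0 cn0 Fa.
have -> : a = vscale c^-1 (fun x => c * a x).
  by apply: funext => x; rewrite /vscale mulrA mulVf // mul1r.
by apply: HS => //; rewrite invr_ge0.
Qed.

Lemma simp_vK (R : realType) d (P : finPOrderType d) (v : P -> P -> R) :
  (forall f, order_cone f <-> exists c : P -> R, (forall i, 0 <= c i) /\
                         forall x, f x = \sum_(i : P) c i * v i x) ->
  forall j, order_cone (v j).
Proof.
move=> Hv j; apply/Hv; exists (fun i => (i == j)%:R); split; first by move=> i; rewrite ler0n.
move=> x; rewrite (bigD1 j) //= eqxx mul1r big1 ?addr0 // => i /negbTE ->.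
by rewrite mul0r.
Qed.

Lemma simp_v0 (R : realType) (P : finType) (v : P -> P -> R) :
  (forall c : P -> R, (forall x, \sum_(i : P) c i * v i x = 0) -> forall i, c i = 0) ->
  forall j, v j <> @vzero R P.
Proof.
move=> Hi j vj0.
suff : (fun i => (i == j)%:R : R) j = 0 by rewrite /= eqxx => /eqP; rewrite oner_eq0.
apply: (Hi (fun i => (i == j)%:R)) => x; rewrite (bigD1 j) //= vj0 /vzero mulr0 add0r big1 // => i /negbTE ->.
by rewrite mul0r.
Qed.

Lemma q2_le (R : realType) d (P : finPOrderType d) q :
  num_extremal_rays (@order_cone R d P) q -> simplicial (@order_cone R d P) ->
  (q <= #|P|)%N.
Proof.
move=> [Fs [Finj [HE Hall]]] [v [Hi Hv]].
have vK := simp_vK Hv; have v0 := simp_v0 Hi.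
have H : forall k, exists j, Fs k (v j).
  move=> k; have E := HE k; case: (E) => [FF [v' [_ [_ [z [Fz z0]]]]]].
  have [FK _] := FF.
  have [c [c0 Ec]] := (Hv z).1 (FK _ Fz).
  have [j cj] : exists j, c j != 0.
    apply: contra_notP z0 => H; apply: funext => y; rewrite Ec /vzero.
    rewrite big1 // => i _; have /eqP -> : c i == 0 by apply: contra_notT H => ?; exists i.
    by rewrite mul0r.
  exists j; apply: (face_unscale FF (c0 j) cj).
  apply: (face_sum (g := fun i x => c i * v i x)) => //.
    move=> i; case: (vK i) => p0 p1; split.
      by move=> x; rewrite mulr_ge0.
    by move=> x y xy; rewrite ler_wpM2l // p1.
  by have <- : z = (fun x => \sum_i c i * v i x) by apply: funext => x; rewrite Ec.
have [rho Hrho] := boolp.choice H.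
have rinj : injective rho.
  move=> k k' e; apply: Finj; apply: (ray_eq (HE k) (HE k') (Hrho k) _ (v0 _)).
  by rewrite e; apply: Hrho.
have := leq_card _ rinj; by rewrite card_ord.
Qed.

Lemma lower_bound (R : realType) d1 d2 (P1 : finPOrderType d1) (P2 : finPOrderType d2)
  q1 (Fs1 : 'I_q1 -> (P1 -> R) -> Prop) (HE1 : forall k, extremal_ray (@order_cone R d1 P1) (Fs1 k))
  (Finj1 : injective Fs1) (w1 : 'I_q1 -> P1 -> R)
  (Hw1 : forall k, Fs1 k (w1 k) /\ w1 k <> @vzero R P1)
  (v : P2 -> P2 -> R)
  (Hi : forall c : P2 -> R, (forall x, \sum_(i : P2) c i * v i x = 0) -> forall i, c i = 0)
  (Hv : forall f, order_cone f <-> exists c : P2 -> R, (forall i, 0 <= c i) /\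
                         forall x, f x = \sum_(i : P2) c i * v i x)
  m (h : (m <= q1)%N) (sg : 'I_m -> P2) (sginj : injective sg) r :
  nd_decomp (fun x y => \sum_(k < m) w1 (widen_ord h k) x * v (sg k) y) r -> (m <= r)%N.
Proof.
move=> [a [b [aK [bK EM]]]].
have [c Hc] := boolp.choice (fun i => (Hv (b i)).1 (bK i)).
have claim : forall k x, w1 (widen_ord h k) x = \sum_i c i (sg k) * a i x.
  move=> k x.
  pose D j := \sum_i a i x * c i j - \sum_(k' < m) (sg k' == j)%:R * w1 (widen_ord h k') x.
  have D0 : forall y, \sum_j D j * v j y = 0.
    move=> y; rewrite /D.
    under eq_bigr do rewrite mulrBl mulr_suml mulr_suml.
    rewrite sumrB exchange_big /= [X in _ - X = 0]exchange_big /=.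
    have -> : \sum_i \sum_j a i x * c i j * v j y = \sum_i a i x * b i y.
      apply: eq_bigr => i _; rewrite (proj2 (Hc i) y) mulr_sumr.
      by apply: eq_bigr => j _; rewrite mulrA.
    have -> : \sum_(k' < m) \sum_j (sg k' == j)%:R * w1 (widen_ord h k') x * v j y =
              \sum_(k' < m) w1 (widen_ord h k') x * v (sg k') y.
      apply: eq_bigr => k' _; rewrite (bigD1 (sg k')) //= eqxx mul1r big1 ?addr0 //.
      by move=> j /negbTE; rewrite eq_sym => ->; rewrite !mul0r.
    by rewrite -EM subrr.
  have := Hi D D0 (sg k); rewrite /D => /eqP; rewrite subr_eq0 => /eqP E.
  have E2 : \sum_(k' < m) (sg k' == sg k)%:R * w1 (widen_ord h k') x = w1 (widen_ord h k) x.
    rewrite (bigD1 k) //= eqxx mul1r big1 ?addr0 // => k' nk.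
    by rewrite (inj_eq sginj) (negbTE nk) mul0r.
  rewrite E2 in E.
  by rewrite -E; apply: eq_bigr => i _; rewrite mulrC.
have gK : forall k i, order_cone (fun x => c i (sg k) * a i x).
  move=> k i; case: (aK i) => p0 p1; have c0 := proj1 (Hc i) (sg k); split.
    by move=> x; rewrite mulr_ge0.
  by move=> x y xy; rewrite ler_wpM2l // p1.
have H : forall k, exists i, Fs1 (widen_ord h k) (fun x => c i (sg k) * a i x) /\
                     (fun x => c i (sg k) * a i x) <> @vzero R P1.
  move=> k; have [Fw w0] := Hw1 (widen_ord h k).
  have Fsum : forall i, Fs1 (widen_ord h k) (fun x => c i (sg k) * a i x).
    apply: (face_sum (g := fun i x => c i (sg k) * a i x)) => //.
      by case: (HE1 (widen_ord h k)).
    by move: Fw; have -> : w1 (widen_ord h k) = (fun x => \sum_i c i (sg k) * a i x) by apply: funext => x; rewrite claim.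
  apply: contra_notP w0 => H; apply: funext => x; rewrite claim /vzero big1 // => i _.
  have : (fun x => c i (sg k) * a i x) = @vzero R P1.
    by apply: contra_notP H => ne; exists i.
  by move/(congr1 (fun g => g x)).
have [tau Htau] := boolp.choice H.
have tinj : injective tau.
  move=> k k' e.
  have aF : forall k, Fs1 (widen_ord h k) (a (tau k)) /\ a (tau k) <> @vzero R P1.
    move=> k0; have [F0 n0] := Htau k0.
    have cn : c (tau k0) (sg k0) != 0.
      apply: contra_notN n0 => /eqP c0; apply: funext => x; by rewrite c0 mul0r.
    split.
      apply: (face_unscale _ (proj1 (Hc _) _) cn F0).
      by case: (HE1 (widen_ord h k0)).
    move=> a0; apply: n0; apply: funext => x.
    by rewrite (congr1 (fun g => g x) a0) /vzero mulr0.
  have [F1 n1] := aF k; have [F2 _] := aF k'; rewrite -e in F2.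
  have := Finj1 _ _ (ray_eq (HE1 _) (HE1 _) F1 F2 n1).
  by move/(congr1 val) => /= /val_inj.
by have := leq_card _ tinj; rewrite !card_ord.
Qed.

Theorem theorem6 (R : realType) (d1 d2 : Order.disp_t)
  (P1 : finPOrderType d1) (P2 : finPOrderType d2) (q1 q2 : nat) :
  num_extremal_rays (@order_cone R d1 P1) q1 ->
  num_extremal_rays (@order_cone R d2 P2) q2 ->
  simplicial (@order_cone R d2 P2) ->
  max_nd_rank_is R P1 P2 (minn q1 q2).
Proof.
move=> H1 H2 Hs; split; last first.
  move=> M k [r Hr] [_ Hk].
  rewrite leq_min; apply/andP; split; apply: Hk.
    exact: nd_reduce1 H1 Hr.
  exact: nd_reduce2 H2 Hr.
have q2P := q2_le H2 Hs.
have [Fs1 [Finj1 [HE1 _]]] := H1.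
have [v [Hi Hv]] := Hs.
have Hw : forall k, exists w, Fs1 k w /\ w <> @vzero R P1.
  by move=> k; case: (HE1 k) => _ [v' [_ [_ [x [Fx x0]]]]]; exists x.
have [w1 Hw1] := boolp.choice Hw.
set m := minn q1 q2.
have h : (m <= q1)%N by rewrite geq_minl.
have hP : (m <= #|P2|)%N by apply: leq_trans q2P; rewrite geq_minr.
pose sg := fun k : 'I_m => enum_val (widen_ord hP k).
have sginj : injective sg.
  move=> k k' /enum_val_inj /(congr1 val) /= e; exact: val_inj.
exists (fun x y => \sum_(k < m) w1 (widen_ord h k) x * v (sg k) y); split.
  exists m; exists (fun k => w1 (widen_ord h k)), (fun k => v (sg k)); split.
    move=> k; have [F _] := Hw1 (widen_ord h k).
    by case: (HE1 (widen_ord h k)) => [[FK _] _]; apply: FK.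
  by split => // k; exact: (simp_vK Hv (sg k)).
split.
  exists (fun k => w1 (widen_ord h k)), (fun k => v (sg k)); split.
    move=> k; have [F _] := Hw1 (widen_ord h k).
    by case: (HE1 (widen_ord h k)) => [[FK _] _]; apply: FK.
  by split => // k; exact: (simp_vK Hv (sg k)).
by move=> r; apply: (lower_bound HE1 Finj1 Hw1 Hi Hv sginj).
Qed.
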